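(* Let $\mathcal{C}=(\mathcal{L},\mathcal{P})$ be a combinatorial line arrangement with ordered lines $\mathcal{L}=\{\ell_0,\ldots,\ell_n\}$, and let $\Gamma(\mathcal{C})$ be its incidence graph. Then there is a one-to-one correspondence between the elements of $\mathbf{nbc}(\mathcal{C})$ and a set of independent cycles of $\Gamma(\mathcal{C})$ forming a basis of its cycle space; in particular the first Betti number $b_1(\Gamma(\mathcal{C}))$ equals $|\mathbf{nbc}(\mathcal{C})|$.
   Context: A combinatorial line arrangement is a pair $\mathcal{C}=(\mathcal{L},\mathcal{P})$ with $\mathcal{L}$ a finite set (''lines'') and $\mathcal{P}\subset 2^{\mathcal{L}}$ (''intersection points'') such that every $P\in\mathcal{P}$ has $|P|\ge2$ and any two distinct lines lie in a unique common $P\in\mathcal{P}$. Lines are ordered $\ell_0,\ldots,\ell_n$ and points are identified with index sets $I\subset\{0,\ldots,n\}$. The incidence graph $\Gamma(\mathcal{C})$ is the bipartite graph with vertex set $\mathcal{L}\cup\mathcal{P}$ and edges $(\ell,P)$ for $\ell\in P$. A pair $(j,k)$ with $1\le j<k\le n$ is an nbc if there is a point $P_I$ with $j,k\in I$ and $j=\min I$; $\mathbf{nbc}(\mathcal{C})$ is the set of these pairs. *)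

(* Defs.v *)
From mathcomp Require Import all_boot all_order all_algebra.
Set Implicit Arguments. Unset Strict Implicit. Unset Printing Implicit Defensive.

(* Lines are l_0,...,l_n, i.e. the type 'I_n.+1.  A point is identified with
   its index set I : {set 'I_n.+1}; the arrangement is given by its set of
   points P. *)
Section CLA.
Variable n : nat.
Notation line := 'I_n.+1.
Notation point := {set 'I_n.+1}.

Definition is_cla (P : {set point}) : Prop :=
  (forall I, I \in P -> 2 <= #|I|) /\
  (forall j k : line, j != k ->
     exists! I, I \in P /\ j \in I /\ k \in I).

Definition nbc (P : {set point}) : {set line * line} :=
  [set jk : line * line | [&& 1 <= jk.1, jk.1 < jk.2 &
     [exists I in P, [&& jk.1 \in I, jk.2 \in I &
                        [forall i in I, jk.1 <= i]]]]].

Definition vertex := (line + point)%type.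

Definition is_vertex (P : {set point}) (v : vertex) : bool :=
  match v with inl _ => true | inr J => J \in P end.

Definition vertices (P : {set point}) : {set vertex} :=
  [set v | is_vertex P v].

Definition adj (P : {set point}) : rel vertex := fun u v =>
  match u, v with
  | inl l, inr J => (J \in P) && (l \in J)
  | inr J, inl l => (J \in P) && (l \in J)
  | _, _ => false
  end.

Definition edge := (line * point)%type.

Definition edges (P : {set point}) : {set edge} :=
  [set e | (e.2 \in P) && (e.1 \in e.2)].

Definition edge_of (u v : vertex) : option edge :=
  match u, v with
  | inl l, inr J => Some (l, J)
  | inr J, inl l => Some (l, J)
  | _, _ => None
  end.

Definition cycle_edges (s : seq vertex) : {set edge} :=
  [set e | has (fun uv : vertex * vertex => edge_of uv.1 uv.2 == Some e)
                (zip s (rot 1 s))].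

Definition is_graph_cycle (P : {set point}) (F : {set edge}) : Prop :=
  exists s : seq vertex,
    [/\ uniq s, 3 <= size s, cycle (adj P) s & F = cycle_edges s].

Definition deg (F : {set edge}) (v : vertex) : nat :=
  match v with
  | inl l => #|[set e in F | e.1 == l]|
  | inr J => #|[set e in F | e.2 == J]|
  end.

(* the cycle space over F_2 = the even subgraphs *)
Definition in_cycle_space (P : {set point}) (F : {set edge}) : Prop :=
  F \subset edges P /\ forall v, ~~ odd (deg F v).

(* sum in the cycle space (over F_2) = symmetric difference *)
Definition symdiff (A B : {set edge}) : {set edge} := (A :\: B) :|: (B :\: A).

Definition xorsum (T : finType) (S : {set T}) (f : T -> {set edge}) :
  {set edge} := \big[symdiff/set0]_(x in S) f x.

Definition ncomp (P : {set point}) : nat :=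
  #|[set [set w in vertices P | connect (adj P) v w] | v in vertices P]|.

Definition betti1 (P : {set point}) : int :=
  (#|edges P|%:Z - #|vertices P|%:Z + (ncomp P)%:Z)%R.

End CLA.

(* Main.v *)
Require Import Defs.
From mathcomp Require Import all_boot all_order all_algebra.
From mathcomp Require Import zify.
Set Implicit Arguments. Unset Strict Implicit. Unset Printing Implicit Defensive.

Lemma in_symdiff n (A B : {set edge n}) e :
  (e \in symdiff A B) = (e \in A) (+) (e \in B).
Proof. by rewrite /symdiff !inE; case: (e \in A); case: (e \in B). Qed.

Lemma xorsum_mem n (T : finType) (S : {set T}) (f : T -> {set edge n}) e :
  (e \in xorsum S f) = odd (count (fun x => (x \in S) && (e \in f x)) (index_enum T)).
Proof.
rewrite /xorsum; elim: (index_enum T) => [|x r IH]; first by rewrite big_nil inE.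
rewrite big_cons /=; case: (x \in S) => /=; last by rewrite IH.
by rewrite in_symdiff IH oddD; case: (e \in f x).
Qed.

Lemma count_enum1 (T : finType) (p : T) (Q : pred T) :
  (forall x, Q x = (x == p)) -> count Q (index_enum T) = 1.
Proof.
move=> HQ; rewrite (eq_count (a2 := pred1 p)) //.
by rewrite count_uniq_mem ?index_enum_uniq // mem_index_enum.
Qed.

Lemma count_enum0 (T : finType) (Q : pred T) :
  (forall x, Q x = false) -> count Q (index_enum T) = 0.
Proof. by move=> HQ; rewrite (eq_count (a2 := pred0)) // count_pred0. Qed.

Lemma card_symdiff_odd n (A B : {set edge n}) :
  odd #|symdiff A B| = odd #|A| (+) odd #|B|.
Proof.
rewrite /symdiff cardsU.
have -> : (A :\: B) :&: (B :\: A) = set0.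
  by apply/setP => e; rewrite !inE; case: (e \in A); case: (e \in B).
rewrite cards0 subn0.
have HA := cardsID B A. have HB := cardsID A B.
rewrite -HA -HB setIC !oddD.
by case: (odd _); case: (odd _); case: (odd _).
Qed.

Lemma deg_symdiff n (A B : {set edge n}) v :
  odd (deg (symdiff A B) v) = odd (deg A v) (+) odd (deg B v).
Proof.
case: v => [l|J] /=; rewrite -card_symdiff_odd; congr (odd _); apply: eq_card => e;
by rewrite !inE; case: (e \in A); case: (e \in B); case: (_ == _).
Qed.

Lemma card_seq_filter n (s : seq (edge n)) (Q : pred (edge n)) :
  uniq s -> #|[set e in [set x in s] | Q e]| = count Q s.
Proof.
move=> us; rewrite -size_filter -(card_uniqP _) ?filter_uniq //.
by apply: eq_card => e; rewrite !inE mem_filter andbC.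
Qed.

Definition pt n (P : {set {set 'I_n.+1}}) (j k : 'I_n.+1) : {set 'I_n.+1} :=
  odflt set0 [pick I in P | (j \in I) && (k \in I)].

Lemma cla_uniq n (P : {set {set 'I_n.+1}}) (hC : is_cla P) (j k : 'I_n.+1) I I' :
  j != k -> I \in P -> j \in I -> k \in I -> I' \in P -> j \in I' -> k \in I' -> I = I'.
Proof.
move=> jk IP jI kI I'P jI' kI'.
have [I0 [_ HU]] := hC.2 j k jk.
by rewrite -(HU I) // -(HU I').
Qed.

Lemma pt_spec n (P : {set {set 'I_n.+1}}) (hC : is_cla P) (j k : 'I_n.+1) :
  j != k -> [/\ pt P j k \in P, j \in pt P j k & k \in pt P j k].
Proof.
move=> jk; rewrite /pt; case: pickP => [I /andP[-> /andP[-> ->]] //|H].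
have [I0 [[I0P [jI kI]] _]] := hC.2 j k jk.
by move: (H I0); rewrite I0P jI kI.
Qed.

Lemma pt_uniq n (P : {set {set 'I_n.+1}}) (hC : is_cla P) (j k : 'I_n.+1) I :
  j != k -> I \in P -> j \in I -> k \in I -> pt P j k = I.
Proof.
move=> jk IP jI kI; have [H1 H2 H3] := pt_spec hC jk.
by apply: (cla_uniq hC jk).
Qed.

Definition minJ n (J : {set 'I_n.+1}) : 'I_n.+1 :=
  odflt ord0 [pick i in J | [forall k in J, (i : nat) <= k]].

Lemma minJ_spec n (J : {set 'I_n.+1}) x : x \in J ->
  minJ J \in J /\ forall k, k \in J -> (minJ J : nat) <= k.
Proof.
move=> xJ; rewrite /minJ; case: pickP => [i /andP[iJ /forallP H]|H] /=.
  by split => // k kJ; move: (H k); rewrite kJ.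
case: (arg_minnP (fun i : 'I_n.+1 => (i : nat)) xJ) => i iJ Hi.
have iJ' : i \in J := iJ.
have := H i; rewrite /= iJ' /= => /negP; case; apply/forallP => k; apply/implyP => kJ; exact: Hi.
Qed.

Lemma min_uniq n (J : {set 'I_n.+1}) i :
  i \in J -> (forall k, k \in J -> (i : nat) <= k) -> minJ J = i.
Proof.
move=> iJ Hi; have [mJ Hm] := minJ_spec iJ.
by apply: val_inj; apply/eqP; rewrite eqn_leq Hm // Hi.
Qed.

Definition isTree n (e : edge n) : bool :=
  (ord0 \in e.2) || [forall i in e.2, (e.1 : nat) <= i].

Definition fE n (P : {set {set 'I_n.+1}}) (p : 'I_n.+1 * 'I_n.+1) : seq (edge n) :=
  [:: (ord0, pt P ord0 p.1); (p.1, pt P ord0 p.1); (p.1, pt P p.1 p.2);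
      (p.2, pt P p.1 p.2); (p.2, pt P ord0 p.2); (ord0, pt P ord0 p.2)].

Definition fc n (P : {set {set 'I_n.+1}}) (p : 'I_n.+1 * 'I_n.+1) : {set edge n} :=
  [set e in fE P p].

Definition cyc n (P : {set {set 'I_n.+1}}) (p : 'I_n.+1 * 'I_n.+1) : seq (vertex n) :=
  [:: inl ord0; inr (pt P ord0 p.1); inl p.1; inr (pt P p.1 p.2); inl p.2;
      inr (pt P ord0 p.2)].

Definition ne n (P : {set {set 'I_n.+1}}) (p : 'I_n.+1 * 'I_n.+1) : edge n :=
  (p.2, pt P p.1 p.2).

Definition ge n (e : edge n) : 'I_n.+1 * 'I_n.+1 := (minJ e.2, e.1).

Lemma nbc_facts n (P : {set {set 'I_n.+1}}) (hC : is_cla P) (j k : 'I_n.+1) :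
  (j, k) \in nbc P ->
  [/\ [/\ j != ord0, k != ord0, j != k, (j : nat) < k & ord0 \notin pt P j k],
      [/\ pt P j k \in P, j \in pt P j k, k \in pt P j k & forall i, i \in pt P j k -> (j : nat) <= i],
      [/\ pt P ord0 j \in P, ord0 \in pt P ord0 j, j \in pt P ord0 j, pt P ord0 k \in P & ord0 \in pt P ord0 k],
      k \in pt P ord0 k &
      [/\ pt P ord0 j != pt P j k, pt P ord0 k != pt P j k & pt P ord0 j != pt P ord0 k]].
Proof.
rewrite inE /= => /and3P[j1 jk /existsP[I /andP[IP /and3P[jI kI /forallP Hm]]]].
have j0 : j != ord0 by apply/eqP => h; move: j1; rewrite h.
have k0 : k != ord0 by apply/eqP => h; move: jk; rewrite h.
have jnk : j != k by apply/eqP => h; move: jk; rewrite h ltnn.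
have HI : pt P j k = I by apply: pt_uniq.
have Hm' : forall i, i \in I -> (j : nat) <= i by move=> i iI; move: (Hm i); rewrite iI.
have o0 : ord0 \notin I by apply/negP => /Hm' h; by move: (leq_trans j1 h).
have [QjP oQj jQj] : [/\ pt P ord0 j \in P, ord0 \in pt P ord0 j & j \in pt P ord0 j].
  by apply: (pt_spec hC); rewrite eq_sym.
have [QkP oQk kQk] : [/\ pt P ord0 k \in P, ord0 \in pt P ord0 k & k \in pt P ord0 k].
  by apply: (pt_spec hC); rewrite eq_sym.
rewrite HI; split => //.
split; first by apply/eqP => h; move: o0; rewrite -h oQj.
  by apply/eqP => h; move: o0; rewrite -h oQk.
apply/eqP => h; move: o0.
have kQj : k \in pt P ord0 j by rewrite h.
by rewrite (cla_uniq hC jnk IP jI kI QjP jQj kQj) oQj.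
Qed.

Lemma neqF (T : eqType) (x y : T) : x != y -> (x == y) = false /\ (y == x) = false.
Proof. by move=> h; split; [exact: negbTE | rewrite eq_sym; exact: negbTE]. Qed.

Lemma fE_uniq n (P : {set {set 'I_n.+1}}) (hC : is_cla P) (j k : 'I_n.+1) :
  (j, k) \in nbc P -> uniq (fE P (j, k)).
Proof.
move=> /(nbc_facts hC) [[j0 k0 jk _ _] _ _ _ [d1 d2 d3]].
move: (neqF j0) (neqF k0) (neqF jk) (neqF d1) (neqF d2) (neqF d3).
move=> [a1 a2] [a3 a4] [a5 a6] [a7 a8] [a9 a10] [a11 a12].
rewrite /fE /= !inE !xpair_eqE.
by rewrite ?a1 ?a2 ?a3 ?a4 ?a5 ?a6 ?a7 ?a8 ?a9 ?a10 ?a11 ?a12 ?eqxx ?andbF ?andFb ?andbT.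
Qed.

Lemma fc_space n (P : {set {set 'I_n.+1}}) (hC : is_cla P) (j k : 'I_n.+1) :
  (j, k) \in nbc P -> in_cycle_space P (fc P (j, k)).
Proof.
move=> H; have U := fE_uniq hC H.
move: H => /(nbc_facts hC) [_ [IP jI kI _] [QjP oQj jQj QkP oQk] kQk _].
split.
  apply/subsetP => e; rewrite /fc inE /fE /= !inE => /or4P[| | |/or3P[| |]] /eqP -> /=;
  by rewrite ?IP ?QjP ?QkP ?jI ?kI ?oQj ?jQj ?oQk ?kQk.
case=> [l|J]; rewrite /deg /fc card_seq_filter //= ;
by move: (_ == _) (_ == _) (_ == _) => [] [] [].
Qed.

Lemma eq_inl (A B : eqType) (a b : A) : (@inl A B a == inl b) = (a == b). Proof. by []. Qed.
Lemma eq_inr (A B : eqType) (a b : B) : (@inr A B a == inr b) = (a == b). Proof. by []. Qed.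
Lemma eq_inlr (A B : eqType) (a : A) (b : B) : (inl a == inr b) = false. Proof. by []. Qed.
Lemma eq_inrl (A B : eqType) (a : A) (b : B) : (inr b == inl a) = false. Proof. by []. Qed.
Lemma eq_some (A : eqType) (a b : A) : (Some a == Some b) = (a == b). Proof. by []. Qed.

Lemma fc_graph n (P : {set {set 'I_n.+1}}) (hC : is_cla P) (j k : 'I_n.+1) :
  (j, k) \in nbc P -> is_graph_cycle P (fc P (j, k)).
Proof.
move=> H; move: (H) => /(nbc_facts hC) [[j0 k0 jk _ _] [IP jI kI _] [QjP oQj jQj QkP oQk] kQk [d1 d2 d3]].
exists (cyc P (j, k)); split => //.
- move: (neqF j0) (neqF k0) (neqF jk) (neqF d1) (neqF d2) (neqF d3).
  move=> [a1 a2] [a3 a4] [a5 a6] [a7 a8] [a9 a10] [a11 a12].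
  rewrite /cyc /= !inE ?eq_inl ?eq_inr ?eq_inlr ?eq_inrl.
  by rewrite ?a1 ?a2 ?a3 ?a4 ?a5 ?a6 ?a7 ?a8 ?a9 ?a10 ?a11 ?a12.
- by rewrite /cyc /= QjP oQj jQj IP jI kI QkP kQk oQk.
- apply/setP => e; rewrite /fc /cycle_edges !inE /= !eq_some orbF.
  by rewrite !(eq_sym e).
Qed.

Lemma ne_nontree n (P : {set {set 'I_n.+1}}) (hC : is_cla P) (j k : 'I_n.+1) :
  (j, k) \in nbc P -> ~~ isTree (k, pt P j k).
Proof.
move=> /(nbc_facts hC) [[_ _ _ jk o0] [_ jI _ _] _ _ _].
rewrite /isTree /= (negbTE o0) /=; apply/forallP => H.
by move: (H j); rewrite jI /= leqNgt jk.
Qed.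

Lemma fc_nontree n (P : {set {set 'I_n.+1}}) (hC : is_cla P) (j k : 'I_n.+1) e :
  (j, k) \in nbc P -> ~~ isTree e -> (e \in fc P (j, k)) = (e == (k, pt P j k)).
Proof.
move=> H nt; move: (H) => /(nbc_facts hC) [_ [_ _ _ Hm] [_ oQj _ _ oQk] _ _].
rewrite /fc inE /fE /= !inE.
case: (boolP (e == (k, pt P j k))) => [/eqP ->|nk]; first by rewrite orTb !orbT.
rewrite orFb; apply/negbTE/negP => /or4P[| | |/orP[|]] /eqP he; move: nt; rewrite he /isTree /=.
- by rewrite oQj.
- by rewrite oQj.
- rewrite negb_or => /andP[_ /forallP]; apply => i; apply/implyP; exact: Hm.
- by rewrite oQk.
- by rewrite oQk.
Qed.

Lemma g_ne n (P : {set {set 'I_n.+1}}) (hC : is_cla P) (j k : 'I_n.+1) :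
  (j, k) \in nbc P -> ge (ne P (j, k)) = (j, k).
Proof.
move=> /(nbc_facts hC) [_ [_ jI _ Hm] _ _ _].
by rewrite /ge /ne /= (min_uniq jI Hm).
Qed.

Lemma ne_g n (P : {set {set 'I_n.+1}}) (hC : is_cla P) (e : edge n) :
  e \in edges P -> ~~ isTree e -> ge e \in nbc P /\ ne P (ge e) = e.
Proof.
case: e => l J; rewrite /edges inE /isTree /= => /andP[JP lJ].
rewrite negb_or => /andP[o0 nf].
have [mJ Hm] := minJ_spec lJ.
have ml : minJ J != l.
  apply/eqP => h; move: nf; rewrite -h => /forallP; apply => i; apply/implyP; exact: Hm.
have ml' : (minJ J : nat) < l by rewrite ltn_neqAle Hm // andbT; rewrite (inj_eq val_inj).
have m1 : 0 < (minJ J : nat).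
  rewrite lt0n; apply/negP => /eqP h.
  have : minJ J = ord0 by apply: val_inj.
  by move=> h'; move: o0; rewrite -h' mJ.
split.
  rewrite /ge inE /= m1 ml' /=; apply/existsP; exists J.
  rewrite JP mJ lJ /=; apply/forallP => i; apply/implyP; exact: Hm.
by rewrite /ne /ge /= (pt_uniq hC ml JP mJ lJ).
Qed.

Lemma ne_inj n (P : {set {set 'I_n.+1}}) (hC : is_cla P) x y :
  x \in nbc P -> y \in nbc P -> ne P x = ne P y -> x = y.
Proof.
case: x => a b; case: y => c d => hx hy h.
by rewrite -(g_ne hC hx) -(g_ne hC hy) h.
Qed.

Lemma fc_nontree' n (P : {set {set 'I_n.+1}}) (hC : is_cla P) x e :
  x \in nbc P -> ~~ isTree e -> (e \in fc P x) = (e == ne P x).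
Proof. by case: x => a b hx nt; rewrite (fc_nontree hC hx nt). Qed.

Lemma ne_nontree' n (P : {set {set 'I_n.+1}}) (hC : is_cla P) x :
  x \in nbc P -> ~~ isTree (ne P x).
Proof. by case: x => a b hx; exact: (ne_nontree hC hx). Qed.

Lemma ne_edges n (P : {set {set 'I_n.+1}}) (hC : is_cla P) x :
  x \in nbc P -> ne P x \in edges P.
Proof.
case: x => a b /(nbc_facts hC) [_ [IP _ kI _] _ _ _].
by rewrite /edges inE /= IP kI.
Qed.

Lemma indep n (P : {set {set 'I_n.+1}}) (hC : is_cla P) (S : {set 'I_n.+1 * 'I_n.+1}) :
  S \subset nbc P -> S != set0 -> xorsum S (fc P) != set0.
Proof.
move=> /subsetP sS /set0Pn [p pS]; apply/set0Pn; exists (ne P p).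
have pN := sS p pS.
rewrite xorsum_mem (@count_enum1 _ p) // => x.
case: (boolP (x \in S)) => xS /=; last first.
  by apply/esym/negbTE; apply: contraNneq xS => ->.
rewrite (fc_nontree' hC (sS x xS) (ne_nontree' hC pN)).
apply/eqP/eqP => [h|->] //.
by apply: (ne_inj hC (sS x xS) pN).
Qed.

Lemma card_single (T : finType) (X : {set T}) x :
  x \in X -> (forall y, y \in X -> y = x) -> #|X| = 1.
Proof.
move=> xX H; have -> : X = [set x]; last by rewrite cards1.
by apply/setP => y; rewrite inE; apply/idP/eqP => [/H|->].
Qed.

Lemma tree_empty n (P : {set {set 'I_n.+1}}) (hC : is_cla P) (G : {set edge n}) :
  in_cycle_space P G -> (forall e, e \in G -> isTree e) -> G = set0.
Proof.
move=> [/subsetP sG ev] tr.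
have sG' : forall e, e \in G -> e.2 \in P /\ e.1 \in e.2.
  by move=> e /sG; rewrite /edges inE => /andP.
have st1 : forall e, e \in G -> ord0 \in e.2.
  case=> l J eG; apply/negPn/negP => o0.
  have Hm : forall i, i \in J -> (l : nat) <= i.
    move: (tr _ eG); rewrite /isTree /= (negbTE o0) /= => /forallP H i iJ.
    by move: (H i); rewrite iJ.
  have lJ : l \in J by case: (sG' _ eG).
  move: (ev (inr J)); rewrite /= (@card_single _ _ (l, J)) // ?inE ?eG ?eqxx //.
  case=> l' J'; rewrite inE => /andP[e'G /eqP /= e2]; subst J'.
  have l'J : l' \in J by case: (sG' _ e'G).
  have Hm' : forall i, i \in J -> (l' : nat) <= i.
    move: (tr _ e'G); rewrite /isTree /= (negbTE o0) /= => /forallP H i iJ.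
    by move: (H i); rewrite iJ.
  by rewrite -(min_uniq lJ Hm) -(min_uniq l'J Hm').
have st2 : forall e, e \in G -> e.1 = ord0.
  case=> l J eG /=; apply/eqP/negPn/negP => l0.
  have [JP lJ] := sG' _ eG; have oJ := st1 _ eG.
  move: (ev (inl l)); rewrite /= (@card_single _ _ (l, J)) // ?inE ?eG ?eqxx //.
  case=> l' J'; rewrite inE => /andP[e'G /eqP /= e1]; subst l'.
  have [J'P lJ'] := sG' _ e'G; have oJ' := st1 _ e'G.
  by move: (cla_uniq hC l0 J'P lJ' oJ' JP lJ oJ) => /= ->.
apply/setP => [[l J]]; rewrite inE; apply/negP => eG.
move: (ev (inr J)); rewrite /= (@card_single _ _ (l, J)) // ?inE ?eG ?eqxx //.
case=> l' J'; rewrite inE => /andP[e'G /eqP /= e2]; subst J'.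
by move: (st2 _ e'G) (st2 _ eG) => /= -> ->.
Qed.

Lemma space_symdiff n (P : {set {set 'I_n.+1}}) (A B : {set edge n}) :
  in_cycle_space P A -> in_cycle_space P B -> in_cycle_space P (symdiff A B).
Proof.
move=> [/subsetP sA eA] [/subsetP sB eB]; split.
  apply/subsetP => e; rewrite in_symdiff.
  by case: (boolP (e \in A)) => [/sA|_] //= /sB.
by move=> v; rewrite deg_symdiff (negbTE (eA v)) (negbTE (eB v)).
Qed.

Lemma space0 n (P : {set {set 'I_n.+1}}) : in_cycle_space P set0.
Proof.
split; first exact: sub0set.
by case=> [l|J] /=; rewrite (_ : [set _ in set0 | _] = set0) ?cards0 //;
  apply/setP => e; rewrite !inE.
Qed.

Lemma span_cyc n (P : {set {set 'I_n.+1}}) (hC : is_cla P) F :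
  in_cycle_space P F ->
  exists2 S : {set 'I_n.+1 * 'I_n.+1}, S \subset nbc P & F = xorsum S (fc P).
Proof.
move=> HF; set S := [set p in nbc P | ne P p \in F].
have sS : S \subset nbc P by apply/subsetP => p; rewrite inE => /andP[].
exists S => //.
set X := xorsum S (fc P).
have HX : in_cycle_space P X.
  rewrite /X /xorsum; apply: big_ind => //; first exact: space0.
    by move=> ? ?; apply: space_symdiff.
  move=> [a b] /(subsetP sS) H; exact: (fc_space hC H).
have HG := space_symdiff HF HX.
have tr : forall e, e \in symdiff F X -> isTree e.
  move=> e eG; apply/negPn/negP => nt.
  have eE : e \in edges P by have [/subsetP sG _] := HG; apply: sG.
  have [gN ng] := ne_g hC eE nt.
  have key : e \in X = (e \in F).
    rewrite /X xorsum_mem.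
    case: (boolP (e \in F)) => eF.
      rewrite (@count_enum1 _ (ge e)) // => x.
      case: (boolP (x \in S)) => xS /=.
        have xN := subsetP sS x xS.
        rewrite (fc_nontree' hC xN nt); apply/eqP/eqP => [h|->] //.
        by apply: (ne_inj hC xN gN); rewrite ng.
      apply/esym/negbTE; apply: contraNneq xS => ->.
      by rewrite inE gN ng eF.
    rewrite count_enum0 // => x.
    case: (boolP (x \in S)) => xS //=.
    have xN := subsetP sS x xS.
    rewrite (fc_nontree' hC xN nt); apply/negbTE; apply: contraNneq eF => ->.
    by move: xS; rewrite inE => /andP[].
  by move: eG; rewrite in_symdiff key; case: (e \in F).
have G0 := tree_empty hC HG tr.
apply/setP => e; move/setP: G0 => /(_ e); rewrite in_symdiff inE.
by case: (e \in F); case: (e \in X).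
Qed.

Lemma pt_ne0 n (P : {set {set 'I_n.+1}}) (hC : is_cla P) J :
  J \in P -> exists x, x \in J.
Proof. by move=> /hC.1 h; apply/card_gt0P; apply: leq_trans h. Qed.

Lemma conn0 n (P : {set {set 'I_n.+1}}) (hC : is_cla P) w :
  w \in vertices P -> connect (adj P) (inl ord0) w.
Proof.
have hl : forall l, connect (adj P) (inl ord0) (inl l).
  move=> l; case: (eqVneq l ord0) => [->|l0]; first exact: connect0.
  have [QP oQ lQ] : [/\ pt P ord0 l \in P, ord0 \in pt P ord0 l & l \in pt P ord0 l].
    by apply: (pt_spec hC); rewrite eq_sym.
  apply: (@connect_trans _ _ (inr (pt P ord0 l))); apply: connect1 => /=.
    by rewrite QP oQ.
  by rewrite QP lQ.
case: w => [l|J] //; rewrite inE /= => JP.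
have [x xJ] := pt_ne0 hC JP.
apply: (connect_trans (hl x)); apply: connect1 => /=; by rewrite JP xJ.
Qed.

Lemma ncomp1 n (P : {set {set 'I_n.+1}}) (hC : is_cla P) : ncomp P = 1.
Proof.
have sym : symmetric (adj P) by case=> [?|?] [?|?].
have v0 : inl ord0 \in vertices P by rewrite inE.
rewrite /ncomp; set V := vertices P.
have -> : [set [set w in V | connect (adj P) v w] | v in V] = [set V].
  apply/setP => C; rewrite inE; apply/imsetP/eqP => [[v vV ->]|->].
    apply/setP => w; rewrite inE; case: (boolP (w \in V)) => //= wV.
    apply: (connect_trans _ (conn0 hC wV)).
    by rewrite (sym_connect_sym sym); apply: conn0.
  exists (inl ord0) => //; apply/setP => w; rewrite inE.
  by case: (boolP (w \in V)) => //= wV; rewrite (conn0 hC wV).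
by rewrite cards1.
Qed.

Lemma card_nontree n (P : {set {set 'I_n.+1}}) (hC : is_cla P) :
  #|edges P :\: [set e | isTree e]| = #|nbc P|.
Proof.
have -> : nbc P = [set ge e | e in edges P :\: [set e | isTree e]].
  apply/setP => p; apply/idP/imsetP => [pN|[e]].
    exists (ne P p); last by case: p pN => a b pN; rewrite (g_ne hC pN).
    by rewrite in_setD inE (ne_nontree' hC pN) (ne_edges hC pN).
  rewrite in_setD inE => /andP[nt eE] ->.
  by have [] := ne_g hC eE nt.
rewrite card_in_imset // => e1 e2; rewrite !in_setD => /andP[nt1 E1] /andP[nt2 E2] h.
rewrite inE in nt1; rewrite inE in nt2.
have [_ <-] := ne_g hC E1 nt1.
by have [_ <-] := ne_g hC E2 nt2; rewrite h.
Qed.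

Definition hv n (e : edge n) : vertex n :=
  if e.1 == minJ e.2 then inr e.2 else inl e.1.

Lemma tree_nonmin n (P : {set {set 'I_n.+1}}) (e : edge n) :
  e \in edges P -> isTree e -> e.1 != minJ e.2 -> ord0 \in e.2 /\ e.1 != ord0.
Proof.
case: e => l J; rewrite /edges inE /isTree /= => /andP[JP lJ] /orP[oJ|/forallP H] nm.
  split => //; apply: contraNneq nm => ->.
  by apply/eqP/esym/min_uniq.
case/negP: nm; apply/eqP/esym/min_uniq => // i iJ.
by move: (H i); rewrite iJ.
Qed.

Lemma card_tree n (P : {set {set 'I_n.+1}}) (hC : is_cla P) :
  #|edges P :&: [set e | isTree e]| = #|vertices P :\ inl ord0|.
Proof.
have -> : vertices P :\ inl ord0 = [set hv e | e in edges P :&: [set e | isTree e]].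
  apply/setP => v; apply/idP/imsetP => [|[e]].
    case: v => [l|J]; rewrite !inE /=.
      rewrite andbT eq_inl => l0.
      have [QP oQ lQ] : [/\ pt P ord0 l \in P, ord0 \in pt P ord0 l & l \in pt P ord0 l].
        by apply: (pt_spec hC); rewrite eq_sym.
      exists (l, pt P ord0 l); first by rewrite !inE /= QP lQ /isTree /= oQ.
      rewrite /hv /=; have -> : minJ (pt P ord0 l) = ord0 by apply: min_uniq.
      by rewrite (negbTE l0).
    move=> JP; have [x xJ] := pt_ne0 hC JP.
    have [mJ Hm] := minJ_spec xJ.
    exists (minJ J, J); last by rewrite /hv /= eqxx.
    rewrite !inE /= JP mJ /isTree /=; apply/orP; right.
    by apply/forallP => i; apply/implyP => /Hm.
  rewrite in_setI => /andP[eE]; rewrite inE => tr ->.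
  rewrite /hv; case: ifP => [_|/negbT nm].
    by move: eE; rewrite !inE => /andP[].
  have [_ l0] := tree_nonmin eE tr nm.
  by rewrite !inE /= andbT.
rewrite card_in_imset // => e1 e2; rewrite !in_setI => /andP[E1 t1] /andP[E2 t2].
rewrite inE in t1; rewrite inE in t2.
rewrite /hv; case: ifP => [/eqP m1|/negbT m1]; case: ifP => [/eqP m2|/negbT m2] //.
- move: E1 t1 m1 E2 t2 m2; case: e1 => l1 J1; case: e2 => l2 J2 /= _ _ -> _ _ ->.
  by case=> ->.
- move=> hl; have {}hl : e1.1 = e2.1 by case: hl.
  have [o1 l01] := tree_nonmin E1 t1 m1; have [o2 l02] := tree_nonmin E2 t2 m2.
  move: E1 E2; rewrite /edges !inE => /andP[J1P lJ1] /andP[J2P lJ2].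
  clear t1 t2 m1 m2; move: o1 l01 J1P lJ1 o2 l02 J2P lJ2 hl; case: e1 => l1 J1; case: e2 => l2 J2 /= o1 l01 J1P lJ1 o2 l02 J2P lJ2 hl.
  subst l2; by rewrite (cla_uniq hC l01 J1P lJ1 o1 J2P lJ2 o2).
Qed.

Lemma betti_eq n (P : {set {set 'I_n.+1}}) (hC : is_cla P) :
  betti1 P = ((#|nbc P|)%:Z)%R.
Proof.
rewrite /betti1 (ncomp1 hC).
rewrite -(cardsID [set e | isTree e] (edges P)) (card_tree hC) (card_nontree hC).
have v0 : inl ord0 \in vertices P by rewrite inE.
rewrite (cardsD1 (inl ord0) (vertices P)) v0.
have -> : (true + #|vertices P :\ inl ord0|)%N = (#|vertices P :\ inl ord0|).+1 by [].
lia.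
Qed.

Theorem mainTheorem2 (n : nat) (P : {set {set 'I_n.+1}}) (hC : is_cla P) :
  (exists f : 'I_n.+1 * 'I_n.+1 -> {set edge n},
     [/\ {in nbc P &, injective f},
         (forall p, p \in nbc P -> is_graph_cycle P (f p)),
         (forall S : {set 'I_n.+1 * 'I_n.+1}, S \subset nbc P -> S != set0 -> xorsum S f != set0) &
         (forall F, in_cycle_space P F ->
            exists2 S : {set 'I_n.+1 * 'I_n.+1}, S \subset nbc P & F = xorsum S f)])
  /\ betti1 P = ((#|nbc P|)%:Z)%R.
Proof.
split; last exact: betti_eq.
exists (fc P); split.
- move=> p q pN qN h; apply/eqP/negPn/negP => pq.
  have := indep hC (S := [set p; q]).
  rewrite subUset !sub1set pN qN /= => /(_ isT).
  have -> : [set p; q] != set0 by apply/set0Pn; exists p; rewrite !inE eqxx.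
  move=> /(_ isT) /set0Pn [e]; rewrite xorsum_mem.
  suff -> : count (fun x => (x \in [set p; q]) && (e \in fc P x)) (index_enum _) =
            (e \in fc P p).*2 by rewrite odd_double.
  case: (boolP (e \in fc P p)) => ep /=; last first.
    rewrite count_enum0 // => x; apply/negbTE/negP; rewrite in_set2.
    by move=> /andP[/orP[] /eqP -> ]; rewrite -?h (negbTE ep).
  rewrite (eq_count (a2 := predU (pred1 p) (pred1 q))); last first.
    move=> x; rewrite in_set2 /=.
    case: (boolP (x == p)) => [/eqP->|_] /=; first by rewrite ep.
    by case: (boolP (x == q)) => [/eqP->|] //=; rewrite -h ep.
  have := count_predUI (pred1 p) (pred1 q) (index_enum ('I_n.+1 * 'I_n.+1)%type).
  rewrite (@count_enum1 _ p (pred1 p)) // (@count_enum1 _ q (pred1 q)) //.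
  rewrite (@count_enum0 _ (predI (pred1 p) (pred1 q))) ?addn0 => [->//|x] /=.
  by case: (boolP (x == p)) => [/eqP->|] //=; rewrite (negbTE pq).
- by move=> [a b] pN; exact: fc_graph.
- exact: (indep hC).
- exact: (span_cyc hC).
Qed.
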